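(* Let $r\geq 3$ and $k\geq 2$, and let $G$ be a $\mathcal{G}^{(r)}_k$-free $r$-graph. Then every maximal connected subgraph of $G$ (i.e. every element of the partition $\mathcal{M}_{1}$ of $E(G)$ into maximal connected subgraphs) is an $m$-tree for some $m\in\{1,\dots,k-1\}$.
   Context: An $r$-graph is an $r$-uniform hypergraph, identified with its edge set. An $(s,k)$-configuration is an $r$-graph with exactly $k$ edges and at most $s$ vertices. $\mathcal{G}^{(r)}_k$ is the family of all $r$-graphs that are either $(rk-2k+2,k)$-configurations or $(r\ell-2\ell+1,\ell)$-configurations for some $\ell\in\{2,\dots,k-1\}$; $\mathcal{G}^{(r)}_k$-free means containing no member of this family as a subgraph. An $r$-graph $F$ is connected if for any two edges $X,Y$ of $F$ there is a sequence of edges $X=X_1,\dots,X_m=Y$ of $F$ with $|X_i\cap X_{i+1}|\ge2$ for all $i$. A $1$-tree is an $r$-graph with a single edge; for $i\geq2$ an $i$-tree is an $r$-graph obtained from an $(i-1)$-tree $T$ by adding a new edge consisting of a pair of vertices contained together in some edge of $T$ and $r-2$ new vertices not in $T$. *)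

(* Defs.v *)
From mathcomp Require Import all_boot.
Set Implicit Arguments. Unset Strict Implicit. Unset Printing Implicit Defensive.

(* An r-graph on a finite vertex type T is identified with its edge set. *)
Section Hyper.
Context {T : finType}.

Definition is_rgraph (r : nat) (G : {set {set T}}) : Prop :=
  forall e, e \in G -> #|e| = r.

Definition verts (F : {set {set T}}) : {set T} := \bigcup_(e in F) e.

Definition config (s k : nat) (F : {set {set T}}) : Prop :=
  #|F| = k /\ #|verts F| <= s.

Definition in_Gfam (r k : nat) (F : {set {set T}}) : Prop :=
  is_rgraph r F /\
  (config (r * k - 2 * k + 2) k F \/
   exists l, 2 <= l <= k - 1 /\ config (r * l - 2 * l + 1) l F).

Definition Gfree (r k : nat) (G : {set {set T}}) : Prop :=
  forall F : {set {set T}}, F \subset G -> ~ in_Gfam r k F.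

Definition adj2 (F : {set {set T}}) : rel {set T} :=
  fun X Y => [&& X \in F, Y \in F & 1 < #|X :&: Y|].

Definition connectedH (F : {set {set T}}) : Prop :=
  forall X Y, X \in F -> Y \in F -> connect (adj2 F) X Y.

Definition max_connected (G M : {set {set T}}) : Prop :=
  [/\ M \subset G, M != set0, connectedH M &
      forall M' : {set {set T}}, M \subset M' -> M' \subset G -> connectedH M' -> M' = M].

Inductive is_tree (r : nat) : nat -> {set {set T}} -> Prop :=
| tree1 (e : {set T}) : #|e| = r -> is_tree r 1 [set e]
| treeS i (Tr : {set {set T}}) (X : {set T}) (u v : T) (N : {set T}) :
    is_tree r i Tr -> X \in Tr -> u \in X -> v \in X -> u != v ->
    #|N| = r - 2 -> [disjoint N & verts Tr] ->
    is_tree r i.+1 (Tr :|: [set u |: (v |: N)]).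

End Hyper.

(* Main.v *)
Require Import Defs.
From mathcomp Require Import all_boot.
From mathcomp Require Import zify.

Lemma exit_edge (T : finType) (S M : {set {set T}}) X Y :
  connect (adj2 M) X Y -> X \in S -> Y \notin S ->
  exists a b, [/\ a \in S, b \notin S & adj2 M a b].
Proof.
move/connectP=> [p Hp ->].
elim: p X Hp => [|z p IH] X /= Hp HX HY; first by rewrite HX in HY.
case/andP: Hp => Hxz Hp.
case: (boolP (z \in S)) => Hz; first exact: (IH z Hp Hz HY).
by exists X, z.
Qed.

Lemma grow (T : finType) r (G M : {set {set T}}) :
  3 <= r -> is_rgraph r G -> M \subset G -> connectedH M ->
  forall n, 0 < n <= #|M| ->
  exists S : {set {set T}}, [/\ S \subset M, #|S| = n,
     #|verts S| <= (r-2)*n+2 & (#|verts S| = (r-2)*n+2 -> is_tree r n S)].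
Proof.
move=> Hr HG HMG HM; elim=> [|n IH] //; case: n IH => [|n] IH.
  move=> /andP[_ HM1]; have /set0Pn[e He] : M != set0 by rewrite -card_gt0.
  have He' : #|e| = r by apply: HG; apply: (subsetP HMG).
  exists [set e]; rewrite cards1 /verts big_set1 He'; split.
  - by rewrite sub1set.
  - by [].
  - lia.
  - by move=> _; rewrite -He'; apply: tree1.
move=> /andP[_ Hn]; have [|S [HSM HSn HSv HSt]] := IH; first by rewrite /= ltnW.
have : ~~ (M \subset S).
  apply/negP => /subset_leq_card; rewrite HSn; lia.
case/subsetPn => Y HY HYS.
have /set0Pn[X0 HX0] : S != set0 by rewrite -card_gt0 HSn.
have [a [e [Ha He /and3P[HaM HeM Hae]]]] :=
  @exit_edge _ S M _ _ (HM _ _ (subsetP HSM _ HX0) HY) HX0 HYS.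
have Her : #|e| = r by apply: HG; apply: (subsetP HMG).
set V := verts S.
have HaV : a \subset V by rewrite /V /verts; exact: (bigcup_sup a Ha).
have HeV : #|a :&: e| <= #|e :&: V|.
  by rewrite setIC; apply: subset_leq_card; apply: setIS.
have Hv : verts (e |: S) = e :|: V by rewrite /verts big_setU1.
have Hc := cardsUI e V.
have Hc2 := cardsID V e.
exists (S :|: [set e]); rewrite setUC Hv; split.
- by rewrite subUset sub1set HeM HSM.
- by rewrite cardsU1 He HSn.
- rewrite mulnSr; move: HSv Hc Hc2 HeV Hae Her; clear; rewrite /V; move: ((r-2)*n.+1) => z; lia.
move=> Heq.
have [HV HI] : #|V| = (r-2)*n.+1+2 /\ #|e :&: V| == 2.
  move: Heq; rewrite mulnSr; move: HSv Hc Hc2 HeV Hae Her; clear; rewrite /V.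
  move: ((r-2)*n.+1) => z; lia.
have Ht := HSt HV.
have /cards2P[u [v [Huv Huv']]] := HI.
have Heq2 : a :&: e = e :&: V.
  apply/eqP; rewrite eqEcard (eqP HI) Hae andbT setIC; exact: setIS.
have Hu : u \in e :&: V by rewrite Huv' !inE eqxx.
have Hv' : v \in e :&: V by rewrite Huv' !inE eqxx orbT.
rewrite -Heq2 in Hu Hv'.
move: (Hu) (Hv') => /setIP[HuX Hue] /setIP[HvX Hve].
have Hee : u |: (v |: (e :\: V)) = e.
  by apply/setP => x; rewrite -[in RHS](setID e V) Huv' !inE orbA.
suff: is_tree r n.+2 (S :|: [set u |: (v |: (e :\: V))]) by rewrite Hee setUC.
apply: (treeS Ht Ha HuX HvX Huv).
  by rewrite -Her -Hc2 (eqP HI) addKn.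
rewrite -setI_eq0; apply/eqP/setP => x; rewrite !inE.
by case: (x \in V); rewrite ?andbF.
Qed.
Theorem lemma5p4 (T : finType) (r k : nat) (G : {set {set T}}) :
  3 <= r -> 2 <= k -> is_rgraph r G -> Gfree r k G ->
  forall M, max_connected G M ->
  exists m, 1 <= m <= k - 1 /\ is_tree r m M.
Proof.
move=> Hr Hk HG HF M [HMG HM0 HM _].
have Hm : 0 < #|M| by rewrite card_gt0.
have Hrk : forall n, r * n - 2 * n = (r-2)*n by move=> n; rewrite mulnBl.
have HrgS : forall S : {set {set T}}, S \subset M -> is_rgraph r S.
  by move=> S HS e He; apply: HG; apply: (subsetP HMG); apply: (subsetP HS).
have Hmk : #|M| <= k - 1.
  rewrite leqNgt; apply/negP => Hlt.
  have [|S [HSM HSn HSv _]] := @grow _ _ _ _ Hr HG HMG HM k.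
    apply/andP; split; lia.
  apply: (HF S (subset_trans HSM HMG)); split; first exact: HrgS.
  by left; split => //; rewrite Hrk.
have [|S [HSM HSn HSv HSt]] := @grow _ _ _ _ Hr HG HMG HM #|M|.
  by rewrite Hm leqnn.
have HSeq : S = M by apply/eqP; rewrite eqEcard HSM HSn leqnn.
subst S.
exists #|M|; split; first by rewrite Hm.
apply: HSt.
case: (ltnP #|verts M| ((r-2)*#|M|+2)) => Hl; last by apply/eqP; rewrite eqn_leq HSv Hl.
exfalso; case: (ltnP 1 #|M|) => H1.
  apply: (HF M HMG); split; first exact: HrgS.
  right; exists #|M|; split; first by apply/andP; split.
  by split => //; rewrite Hrk; lia.
have /cards1P[e He] : #|M| == 1 by lia.
move: Hl; rewrite He /verts big_set1.
have -> : #|e| = r by apply: HG; apply: (subsetP HMG); rewrite He set11.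
rewrite cards1; lia.
Qed.
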